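(* Let $S^{ES}$ denote the complexity function of the family of evolutionary stable configurations (in the one-dimensional Riviera model). Then for every $\rho$ with $\frac{3}{5} < \rho < \frac{2}{3}$, $$S^{ES}(\rho) = (2\rho - 1) \ln(2\rho - 1) - (2 - 3\rho) \ln(2 - 3\rho) - (5\rho - 3) \ln(5\rho - 3).$$
   Context: A configuration of length $n\ge 0$ is a binary string $c_1c_2\cdots c_n$; $c_k=1$ means lot $k$ is occupied by a house, $c_k=0$ that it is empty. A house at position $k$ is blocked (from sunlight) if $2\le k\le n-1$ and $c_{k-1}=c_{k+1}=1$; lots beyond the ends of the string never obstruct sunlight. A configuration is permissible if no house is blocked. It is maximal (jammed) if it is permissible and, for every $k$ with $c_k=0$, the string obtained by setting $c_k=1$ is not permissible. A maximal configuration is resistant to predators if, for every $k$ with $c_k=0$, in the string obtained by setting $c_k=1$ the new house at position $k$ is blocked; it is resistant to altruists if, for every $k$ with $c_k=0$, in the string obtained by setting $c_k=1$ some house at a position $l\ne k$ is blocked. An evolutionary stable configuration is a maximal configuration resistant to both predators and altruists. Let $J_{k,n}$ be the number of such configurations of length $n$ with exactly $k$ occupied lots; whenever $J_{k,n}=0$ it is redefined to be $1$. The complexity function is $S(\rho)=\sup \limsup_{i\to\infty} \frac{\ln J_{k_i,n_i}}{n_i}$, where the supremum ranges over all sequences $((k_i,n_i))_i$ of pairs of non-negative integers with $n_i\to\infty$ and $k_i/n_i\to\rho$. *)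

(* Defs.v *)
From Stdlib Require Import Reals.
From Coquelicot Require Import Coquelicot.
From mathcomp Require Import all_boot.

Set Implicit Arguments.
Unset Strict Implicit.
Unset Printing Implicit Defensive.
Local Open Scope nat_scope.

(* A configuration of length n is a seq bool c = c_1 ... c_n, stored
   0-indexed: paper position k (1 <= k <= n) is index k-1. *)

Definition blocked (c : seq bool) (k : nat) : bool :=
  [&& nth false c k, 0 < k, k.+1 < size c,
      nth false c k.-1 & nth false c k.+1].

Definition permissible (c : seq bool) : bool :=
  ~~ has (blocked c) (iota 0 (size c)).

Definition occupy (c : seq bool) (k : nat) : seq bool := set_nth false c k true.

Definition maximal (c : seq bool) : bool :=
  permissible c &&
  all (fun k => ~~ nth false c k ==> ~~ permissible (occupy c k))
      (iota 0 (size c)).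

Definition resistant_predators (c : seq bool) : bool :=
  all (fun k => ~~ nth false c k ==> blocked (occupy c k) k)
      (iota 0 (size c)).

Definition resistant_altruists (c : seq bool) : bool :=
  all (fun k => ~~ nth false c k ==>
         has (fun l => (l != k) && blocked (occupy c k) l) (iota 0 (size c)))
      (iota 0 (size c)).

Definition ev_stable (c : seq bool) : bool :=
  [&& maximal c, resistant_predators c & resistant_altruists c].

Definition J0 (k n : nat) : nat :=
  #|[pred c : n.-tuple bool | ev_stable c && (count id c == k)]|.

Definition J (k n : nat) : nat := if J0 k n == 0 then 1 else J0 k n.

Definition admissible_seq (rho : R) (k n : nat -> nat) : Prop :=
  is_lim_seq (fun i => INR (n i)) p_infty /\
  is_lim_seq (fun i => Rdiv (INR (k i)) (INR (n i))) rho.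

Definition S_ES (rho : R) : Rbar :=
  Rbar_lub (fun l : Rbar => exists k n : nat -> nat,
     admissible_seq rho k n /\
     l = LimSup_seq (fun i => Rdiv (ln (INR (J (k i) (n i)))) (INR (n i)))).

(* Main.v *)
Require Import Defs.
From Stdlib Require Import Reals Lra Lia.
From Coquelicot Require Import Coquelicot.

Open Scope R_scope.

Lemma sum_ge_term (f : nat -> R) n j : (forall i, (i <= n)%nat -> 0 <= f i) ->
  (j <= n)%nat -> f j <= sum_f_R0 f n.
Proof.
induction n as [|n IH]; intros Hf Hj.
- replace j with 0%nat by lia. simpl. lra.
- simpl. destruct (Nat.eq_dec j (S n)) as [->|Hne].
  + assert (0 <= sum_f_R0 f n).
    { clear IH Hj. induction n as [|n IH2]; simpl.
      - apply Hf; lia.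
      - assert (0 <= f (S n)) by (apply Hf; lia).
        assert (0 <= sum_f_R0 f n) by (apply IH2; intros; apply Hf; lia). lra. }
    lra.
  + assert (f j <= sum_f_R0 f n) by (apply IH; [intros; apply Hf; lia| lia]).
    assert (0 <= f (S n)) by (apply Hf; lia). lra.
Qed.

Lemma sum_le_const (f : nat -> R) n M : (forall i, (i <= n)%nat -> f i <= M) ->
  sum_f_R0 f n <= INR (S n) * M.
Proof.
induction n as [|n IH]; intros Hf.
- simpl. assert (f 0%nat <= M) by (apply Hf; lia). lra.
- simpl sum_f_R0. rewrite S_INR.
  assert (sum_f_R0 f n <= INR (S n) * M) by (apply IH; intros; apply Hf; lia).
  assert (f (S n) <= M) by (apply Hf; lia). lra.
Qed.

Lemma C_pos n k : 0 < Binomial.C n k.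
Proof.
unfold Binomial.C. apply Rdiv_lt_0_compat.
- apply lt_0_INR, Factorial.lt_O_fact.
- apply Rmult_lt_0_compat; apply lt_0_INR, Factorial.lt_O_fact.
Qed.

Section Bin.
Variables N b : nat.
Hypothesis Hb : (0 < b < N)%nat.
Let x := INR b / INR N.
Let t j := Binomial.C N j * x ^ j * (1 - x) ^ (N - j).

Lemma x_bounds : 0 < x < 1.
Proof.
unfold x. assert (0 < INR b) by (apply lt_0_INR; lia).
assert (INR b < INR N) by (apply lt_INR; lia).
split. apply Rdiv_lt_0_compat; lra.
apply Rmult_lt_reg_r with (INR N); [lra|]. unfold Rdiv. rewrite Rmult_assoc, Rinv_l; lra.
Qed.

Lemma t_nonneg j : 0 <= t j.
Proof.
unfold t. destruct x_bounds.
apply Rmult_le_pos; [apply Rmult_le_pos|]; try apply pow_le; try lra.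
left; apply C_pos.
Qed.

Lemma sum_t : sum_f_R0 t N = 1.
Proof.
unfold t. rewrite <- binomial. replace (x + (1 - x)) with 1 by ring. apply pow1.
Qed.

Lemma t_step j : (j < N)%nat ->
  t (S j) = t j * (INR (N - j) * INR b) / (INR (S j) * INR (N - b)).
Proof.
intros Hj. unfold t. rewrite pascal_step3 by lia.
replace (N - j)%nat with (S (N - S j)) by lia.
assert (HN : 0 < INR N) by (apply lt_0_INR; lia).
assert (HSj : 0 < INR (S j)) by (apply lt_0_INR; lia).
assert (HNb : INR (N - b) = INR N - INR b) by (apply minus_INR; lia).
assert (INR b < INR N) by (apply lt_INR; lia).
assert (1 - x = INR (N - b) / INR N) by (unfold x; rewrite HNb; field; lra).
rewrite H0. unfold x. simpl pow. field. repeat split; lra.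
Qed.

Lemma t_up j : (j < b)%nat -> t j <= t (S j).
Proof.
intros Hj. rewrite t_step by lia.
assert (HT := t_nonneg j).
rewrite minus_INR by lia. rewrite minus_INR by lia. rewrite S_INR.
assert (Hjb : INR j + 1 <= INR b) by (rewrite <- S_INR; apply le_INR; lia).
assert (HbN : INR b + 1 <= INR N) by (rewrite <- S_INR; apply le_INR; lia).
assert (0 <= INR j) by apply pos_INR.
set (T := t j) in *.
set (A := (INR N - INR j) * INR b).
set (B := (INR j + 1) * (INR N - INR b)).
assert (HB : 0 < B) by (unfold B; apply Rmult_lt_0_compat; lra).
assert (HAB : B <= A) by (unfold A, B; nra).
replace (T * A / B) with (T + T * (A - B) / B) by (field; lra).
assert (0 <= T * (A - B) / B).
{ apply Rdiv_le_0_compat; [apply Rmult_le_pos|]; lra. }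
lra.
Qed.

Lemma t_down j : (b <= j)%nat -> (j < N)%nat -> t (S j) <= t j.
Proof.
intros Hj HjN. rewrite t_step by lia.
assert (HT := t_nonneg j).
rewrite minus_INR by lia. rewrite minus_INR by lia. rewrite S_INR.
assert (Hjb : INR b <= INR j) by (apply le_INR; lia).
assert (HbN : INR b + 1 <= INR N) by (rewrite <- S_INR; apply le_INR; lia).
assert (0 < INR b) by (apply lt_0_INR; lia).
set (T := t j) in *.
set (A := (INR N - INR j) * INR b).
set (B := (INR j + 1) * (INR N - INR b)).
assert (HB : 0 < B) by (unfold B; apply Rmult_lt_0_compat; lra).
assert (HAB : A <= B) by (unfold A, B; nra).
replace (T * A / B) with (T - T * (B - A) / B) by (field; lra).
assert (0 <= T * (B - A) / B).
{ apply Rdiv_le_0_compat; [apply Rmult_le_pos|]; lra. }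
lra.
Qed.

Lemma t_max j : (j <= N)%nat -> t j <= t b.
Proof.
intros Hj. destruct (Nat.le_gt_cases j b) as [H|H].
- assert (forall d, (d <= b)%nat -> t (b - d) <= t b).
  { induction d as [|d IH]; intros Hd.
    - replace (b - 0)%nat with b by lia. lra.
    - assert (t (b - S d) <= t (S (b - S d))) by (apply t_up; lia).
      replace (S (b - S d)) with (b - d)%nat in H0 by lia.
      assert (t (b - d) <= t b) by (apply IH; lia). lra. }
  replace j with (b - (b - j))%nat by lia. apply H0; lia.
- assert (forall d, (b + d <= N)%nat -> t (b + d) <= t b).
  { induction d as [|d IH]; intros Hd.
    - replace (b + 0)%nat with b by lia. lra.
    - assert (t (S (b + d)) <= t (b + d)) by (apply t_down; lia).
      replace (S (b + d)) with (b + S d)%nat in H0 by lia.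
      assert (t (b + d) <= t b) by (apply IH; lia). lra. }
  replace j with (b + (j - b))%nat by lia. apply H0; lia.
Qed.

Lemma tb_bounds : / INR (S N) <= t b <= 1.
Proof.
split.
- assert (1 <= INR (S N) * t b).
  { rewrite <- sum_t. apply sum_le_const. intros; apply t_max; lia. }
  assert (0 < INR (S N)) by (apply lt_0_INR; lia).
  apply Rmult_le_reg_l with (INR (S N)); [lra|]. rewrite Rinv_r; lra.
- rewrite <- sum_t. apply sum_ge_term; [intros; apply t_nonneg| lia].
Qed.

Lemma ln_tb : ln (t b) = ln (Binomial.C N b) -
  (INR N * ln (INR N) - INR b * ln (INR b) - (INR N - INR b) * ln (INR N - INR b)).
Proof.
assert (HN : 0 < INR N) by (apply lt_0_INR; lia).
assert (Hb0 : 0 < INR b) by (apply lt_0_INR; lia).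
assert (INR b < INR N) by (apply lt_INR; lia).
assert (HNb : INR (N - b) = INR N - INR b) by (apply minus_INR; lia).
assert (Hx : 1 - x = (INR N - INR b) / INR N) by (unfold x; field; lra).
unfold t. rewrite Hx.
destruct (x_bounds) as [Hx0 Hx1].
rewrite ln_mult. rewrite ln_mult. rewrite !ln_pow. unfold x. rewrite !ln_div.
rewrite HNb. ring.
all: try lra.
all: try apply C_pos.
all: try apply Rmult_lt_0_compat; try apply C_pos; try apply pow_lt; try lra.
all: try apply Rdiv_lt_0_compat; lra.
Qed.
End Bin.

Definition G (N b : R) := N * ln N - b * ln b - (N - b) * ln (N - b).

Lemma binom_bounds (N b : nat) : (0 < b < N)%nat ->
  G (INR N) (INR b) - ln (INR N + 1) <= ln (Binomial.C N b) <= G (INR N) (INR b).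
Proof.
intros Hb. destruct (tb_bounds N b Hb) as [H1 H2].
assert (Ht := ln_tb N b Hb). unfold G.
set (T := Binomial.C N b * (INR b / INR N) ^ b * (1 - INR b / INR N) ^ (N - b)) in *.
assert (0 < INR (S N)) by (apply lt_0_INR; lia).
assert (0 < / INR (S N)) by (apply Rinv_0_lt_compat; lra).
split.
- assert (ln (/ INR (S N)) <= ln T) by (apply ln_le; lra).
  rewrite ln_Rinv in H3 by lra. rewrite S_INR in H3. lra.
- assert (ln T <= ln 1) by (apply ln_le; lra). rewrite ln_1 in H3. lra.
Qed.



Definition g (y : R) := y * ln y.

Lemma lim_g u l : 0 < l -> is_lim_seq u l -> is_lim_seq (fun i => g (u i)) (g l).
Proof.
intros Hl Hu. unfold g. apply is_lim_seq_mult'; [exact Hu|].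
assert (Hc : filterlim ln (locally l) (locally (ln l))).
{ apply continuity_pt_filterlim. apply derivable_continuous_pt.
  exists (/ l). apply derivable_pt_lim_ln; exact Hl. }
exact (filterlim_comp nat R R u ln eventually (locally l) (locally (ln l)) Hu Hc).
Qed.

Lemma G_scale N b n : 0 < b -> b < N -> 0 < n ->
  G N b / n = g (N / n) - g (b / n) - g ((N - b) / n).
Proof.
intros Hb HN Hn. unfold G, g. rewrite !ln_div by lra. field. lra.
Qed.

Definition fS (rho : R) := (2 * rho - 1) * ln (2 * rho - 1)
          - (2 - 3 * rho) * ln (2 - 3 * rho)
          - (5 * rho - 3) * ln (5 * rho - 3).

Lemma INR3 : INR 3 = 3. Proof. simpl; ring. Qed.
Lemma INR5 : INR 5 = 5. Proof. simpl; ring. Qed.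
Lemma INR2 : INR 2 = 2. Proof. simpl; ring. Qed.

Lemma main_lim rho (k n : nat -> nat) (Jr : nat -> nat -> R) :
  3/5 < rho -> rho < 2/3 ->
  (forall k n a b, S n = (3*a+2*b)%nat -> k = (2*a+b)%nat -> (0 < b < S a)%nat ->
      Jr k n = Binomial.C (S a) b) ->
  admissible_seq rho k n ->
  is_lim_seq (fun i => Rdiv (ln (Jr (k i) (n i))) (INR (n i))) (fS rho).
Proof.
intros H1 H2 HJ [Hn Hr].
set (r i := INR (k i) / INR (n i)) in *.
set (U i := 2 * r i - 1).
set (B i := 2 - 3 * r i + 2 * / INR (n i)).
set (D i := U i - B i).
set (Hs i := g (U i) - g (B i) - g (D i)).
set (Ls i := Hs i - (ln 2 * / INR (n i) + ln (INR (n i)) / INR (n i))).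
assert (Hinv : is_lim_seq (fun i => / INR (n i)) 0).
{ exact (is_lim_seq_inv _ _ Hn ltac:(discriminate)). }
assert (HU : is_lim_seq U (2 * rho - 1)).
{ unfold U. apply is_lim_seq_minus'; [|apply is_lim_seq_const].
  apply (is_lim_seq_scal_l r 2 rho Hr). }
assert (HB : is_lim_seq B (2 - 3 * rho)).
{ unfold B. replace (2 - 3 * rho) with (2 - 3 * rho + 2 * 0) by ring.
  apply is_lim_seq_plus'; [apply is_lim_seq_minus'; [apply is_lim_seq_const|]|].
  - apply (is_lim_seq_scal_l r 3 rho Hr).
  - apply (is_lim_seq_scal_l _ 2 0 Hinv). }
assert (HD : is_lim_seq D (5 * rho - 3)).
{ unfold D. replace (5 * rho - 3) with ((2 * rho - 1) - (2 - 3 * rho)) by ring.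
  apply is_lim_seq_minus'; assumption. }
assert (HH : is_lim_seq Hs (fS rho)).
{ unfold Hs, fS. apply is_lim_seq_minus'; [apply is_lim_seq_minus'|].
  - apply lim_g; [lra|exact HU].
  - apply lim_g; [lra|exact HB].
  - apply lim_g; [lra|exact HD]. }
assert (HL : is_lim_seq Ls (fS rho)).
{ unfold Ls. replace (fS rho) with (fS rho - (ln 2 * 0 + 0)) by ring.
  apply is_lim_seq_minus'; [exact HH|].
  apply is_lim_seq_plus'.
  - apply (is_lim_seq_scal_l _ (ln 2) 0 Hinv).
  - apply (is_lim_comp_seq (fun y => ln y / y) (fun i => INR (n i)) p_infty 0).
    + exact is_lim_div_ln_p.
    + exists 0%nat. intros; discriminate.
    + exact Hn. }
apply (is_lim_seq_le_le_loc Ls _ Hs); [| exact HL | exact HH].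
set (dl := Rmin (rho - 3/5) (2/3 - rho) / 2).
assert (Hdl : 0 < dl) by (unfold dl; apply Rmin_case; lra).
assert (Hdl1 : dl <= (rho - 3/5) / 2) by (unfold dl; assert (Rmin (rho - 3/5) (2/3 - rho) <= rho - 3/5) by apply Rmin_l; lra).
assert (Hdl2 : dl <= (2/3 - rho) / 2) by (unfold dl; assert (Rmin (rho - 3/5) (2/3 - rho) <= 2/3 - rho) by apply Rmin_r; lra).
apply is_lim_seq_spec in Hn. apply is_lim_seq_spec in Hr.
specialize (Hn (2 / (5 * dl) + 5)). specialize (Hr (mkposreal dl Hdl)).
generalize (filter_and _ _ Hn Hr). apply filter_imp. intros i [Hni Hri].
simpl in Hri. apply Rabs_def2 in Hri. destruct Hri as [Hri1 Hri2].
assert (Hpos : 0 < 2 / (5 * dl)) by (apply Rdiv_lt_0_compat; lra).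
set (nr := INR (n i)) in *. set (kr := INR (k i)) in *.
assert (Hnr : 0 < nr) by lra.
assert (Hr_def : r i = kr / nr) by reflexivity.
assert (Hk1 : 5 * kr > 3 * nr + 2).
{ assert (kr = r i * nr) by (rewrite Hr_def; field; lra).
  assert (2 < 5 * dl * nr).
  { assert (2 / (5 * dl) * (5 * dl) < nr * (5 * dl)) by (apply Rmult_lt_compat_r; lra).
    replace (2 / (5 * dl) * (5 * dl)) with 2 in H0 by (field; lra). lra. }
  rewrite H. nra. }
assert (Hk2 : 3 * kr < 2 * nr).
{ assert (kr = r i * nr) by (rewrite Hr_def; field; lra). rewrite H. nra. }
assert (Nk1 : (3 * n i + 2 < 5 * k i)%nat).
{ apply INR_lt. rewrite !plus_INR, !mult_INR, INR3, INR5, INR2. fold nr kr. lra. }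
assert (Nk2 : (3 * k i < 2 * n i)%nat).
{ apply INR_lt. rewrite !mult_INR, INR3, INR2. fold nr kr. lra. }
set (a := (2 * k i - n i - 1)%nat). set (b := (2 * n i + 2 - 3 * k i)%nat).
assert (Ea : S (n i) = (3 * a + 2 * b)%nat) by (unfold a, b; lia).
assert (Eb : k i = (2 * a + b)%nat) by (unfold a, b; lia).
assert (Hab : (0 < b < S a)%nat) by (unfold a, b; lia).
rewrite (HJ _ _ a b Ea Eb Hab).
assert (Ra : INR (S a) = 2 * kr - nr).
{ apply (f_equal INR) in Ea. apply (f_equal INR) in Eb.
  rewrite S_INR, !plus_INR, !mult_INR, INR3, INR2 in Ea.
  rewrite !plus_INR, !mult_INR, INR2 in Eb. rewrite S_INR. fold nr kr in Ea, Eb. lra. }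
assert (Rb : INR b = 2 * nr + 2 - 3 * kr).
{ apply (f_equal INR) in Ea. apply (f_equal INR) in Eb.
  rewrite S_INR, !plus_INR, !mult_INR, INR3, INR2 in Ea.
  rewrite !plus_INR, !mult_INR, INR2 in Eb. fold nr kr in Ea, Eb. lra. }
destruct (binom_bounds (S a) b Hab) as [Lo Up].
rewrite Ra, Rb in Lo, Up.
assert (Hid : Hs i = G (2 * kr - nr) (2 * nr + 2 - 3 * kr) / nr).
{ rewrite G_scale by lra.
  assert (EU : U i = (2 * kr - nr) / nr) by (unfold U; rewrite Hr_def; field; lra).
  assert (EB : B i = (2 * nr + 2 - 3 * kr) / nr) by (unfold B; rewrite Hr_def; fold nr; field; lra).
  assert (ED : D i = (2 * kr - nr - (2 * nr + 2 - 3 * kr)) / nr) by (unfold D; rewrite EU, EB; field; lra).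
  unfold Hs. rewrite EU, EB, ED. reflexivity. }
assert (Hln : ln (2 * kr - nr + 1) <= ln 2 + ln nr).
{ rewrite <- ln_mult by lra. apply ln_le; lra. }
split.
- unfold Ls. rewrite Hid. fold nr.
  replace (ln 2 * / nr + ln nr / nr) with ((ln 2 + ln nr) / nr) by (field; lra).
  unfold Rdiv. rewrite <- Rmult_minus_distr_r. apply Rmult_le_compat_r.
  + left; apply Rinv_0_lt_compat; lra.
  + lra.
- rewrite Hid. fold nr. unfold Rdiv. apply Rmult_le_compat_r.
  + left; apply Rinv_0_lt_compat; lra.
  + exact Up.
Qed.

Close Scope R_scope.

From mathcomp Require Import all_boot zify.
Set Implicit Arguments.
Unset Strict Implicit.
Unset Printing Implicit Defensive.

Definition q (a b x e f : bool) : bool :=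
  if x then ~~ (b && e) else [&& b, e & (a || f)].

Lemma blockedE c k : blocked c k = [&& 0 < k, nth false c k.-1, nth false c k & nth false c k.+1].
Proof.
rewrite /blocked; case: (ltnP k.+1 (size c)) => h.
  by case: (0 < k); case: (nth false c k); case: (nth false c k.-1).
by rewrite (nth_default false h) /= !andbF.
Qed.

Lemma nth_occ c k j : k < size c -> nth false (occupy c k) j = (j == k) || nth false c j.
Proof. by move=> hk; rewrite /occupy nth_set_nth /=; case: (j == k). Qed.

Lemma size_occ c k : k < size c -> size (occupy c k) = size c.
Proof. by move=> hk; rewrite /occupy size_set_nth; lia. Qed.

Definition Qc (c : seq bool) k :=
  q ((1 < k) && nth false c (k - 2)) ((0 < k) && nth false c k.-1)
    (nth false c k) (nth false c k.+1) (nth false c k.+2).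

Lemma nth_true_lt c j : nth false c j -> j < size c.
Proof. by case: (ltnP j (size c)) => // h; rewrite nth_default. Qed.

Lemma evE c : ev_stable c = all (Qc c) (iota 0 (size c)).
Proof.
apply/idP/idP.
  move/and3P => [/andP [perm _] pred alt].
  move/hasPn: perm => perm.
  apply/allP => k; rewrite mem_iota add0n => hk.
  have pk := perm k; rewrite mem_iota add0n hk in pk.
  move/allP: pred => /(_ k); rewrite mem_iota add0n hk => /= pr.
  move/allP: alt => /(_ k); rewrite mem_iota add0n hk => /= al.
  rewrite /Qc /q; case ck: (nth false c k).
    move: (pk isT); rewrite blockedE ck /= => /negP pk'; apply/negP => hb; apply: pk'.
    by move: hb; case: (0 < k); case: (nth false c k.-1); case: (nth false c k.+1).
  move: (pr isT); rewrite ck /= blockedE !nth_occ // eqxx /= => /and3P [k0 h1 h2].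
  have E1 : (k.-1 == k) = false by lia.
  have E2 : (k.+1 == k) = false by lia.
  move: h1 h2; rewrite E1 E2 /= k0 => -> -> /=.
  move: (al isT); rewrite ck /= => /hasP [l]; rewrite mem_iota add0n => hl /andP [lk].
  rewrite blockedE !nth_occ // => /and4P [l0 b1 b2 b3].
  case F1: (l.-1 == k).
    have el : l = k.+1 by lia.
    move: b3; rewrite el; have -> : (k.+2 == k) = false by lia.
    by move=> /= ->; rewrite orbT.
  case F2: (l.+1 == k).
    have el : l = k.-1 by lia.
    move: b1; rewrite el; have -> : (k.-1.-1 == k) = false by lia.
    have -> : k.-1.-1 = k - 2 by lia.
    by move=> /= ->; have -> : 1 < k by lia.
  move: b1 b2 b3; rewrite F1 F2 (negbTE lk) /= => b1 b2 b3.
  by move: (perm l); rewrite mem_iota add0n hl blockedE l0 b1 b2 b3 => /(_ isT).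
move/allP=> H.
have pred : forall k, k < size c -> ~~ nth false c k -> blocked (occupy c k) k.
  move=> k hk ck; move: (H k); rewrite mem_iota add0n hk /Qc /q (negbTE ck) => /(_ isT).
  move=> /and3P [/andP [k0 b] e _].
  by rewrite blockedE !nth_occ // eqxx k0 b e !orbT.
apply/and3P; split.
- apply/andP; split.
    apply/hasPn => l; rewrite mem_iota add0n => hl; rewrite blockedE.
    apply/negP => /and4P [l0 a b e].
    by move: (H l); rewrite mem_iota add0n hl /Qc /q b l0 a e => /(_ isT).
  apply/allP => k; rewrite mem_iota add0n => hk; apply/implyP => ck.
  apply/negP => /hasPn /(_ k); rewrite mem_iota add0n size_occ // hk => /(_ isT).
  by rewrite pred.
- apply/allP => k; rewrite mem_iota add0n => hk; apply/implyP => ck; exact: pred.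
apply/allP => k; rewrite mem_iota add0n => hk; apply/implyP => ck.
move: (H k); rewrite mem_iota add0n hk /Qc /q (negbTE ck) => /(_ isT).
move=> /and3P [/andP [k0 b] e /orP [/andP [k1 a] | f]].
  apply/hasP; exists k.-1; first by rewrite mem_iota; lia.
  rewrite blockedE !nth_occ //.
  have -> : (k.-1 == k) = false by lia.
  have -> : k.-1.+1 = k by lia.
  rewrite eqxx b orbT /=; have -> : k.-1.-1 = k - 2 by lia.
  by rewrite a orbT andbT; lia.
apply/hasP; exists k.+1.
  by rewrite mem_iota; have := nth_true_lt f; lia.
rewrite blockedE !nth_occ //= eqxx e f !orbT.
by have -> : (k.+1 == k) = false by lia.
Qed.


Fixpoint win (d : seq bool) : bool :=
  match d with
  | x0 :: ((x1 :: x2 :: x3 :: x4 :: _) as d') => q x0 x1 x2 x3 x4 && win d'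
  | _ => true
  end.

Definition Wd (d : seq bool) k :=
  q (nth false d k) (nth false d k.+1) (nth false d k.+2) (nth false d k.+3) (nth false d k.+4).

Lemma win_all d : win d = all (Wd d) (iota 0 (size d - 4)).
Proof.
elim: d => [|x d IH] //.
case: d IH => [|x1 [|x2 [|x3 [|x4 d]]]] // IH.
transitivity (q x x1 x2 x3 x4 && win [:: x1, x2, x3, x4 & d]); first by [].
rewrite IH.
have -> : size [:: x, x1, x2, x3, x4 & d] - 4 = (size d).+1 by rewrite /=; lia.
have -> : size [:: x1, x2, x3, x4 & d] - 4 = size d by rewrite /=; lia.
rewrite /= -[1]/(1 + 0) iotaDl all_map.
by congr andb; apply: eq_all => k.
Qed.

Lemma nth_pad c j : nth false (c ++ [:: false; false]) j = nth false c j.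
Proof.
rewrite nth_cat; case: ltnP => // h; rewrite (nth_default false h).
by case: (j - size c) => [|[|n]] /=; rewrite ?nth_nil.
Qed.

Definition pad c := [:: false, false & c ++ [:: false; false]].

Lemma ES_win c : ev_stable c = win (pad c).
Proof.
rewrite evE win_all.
have -> : size (pad c) - 4 = size c by rewrite /= size_cat /=; lia.
apply: eq_all => k; rewrite /Wd /Qc /pad /=.
rewrite !nth_pad.
case: k => [|[|k]] //=; rewrite !nth_pad //; by have -> : k.+2 - 2 = k by lia.
Qed.

Definition V x y w := win [:: x, y & w ++ [:: false; false]].

Lemma V_cons x y z w : V x y (z :: w) = q x y z (nth false w 0) (nth false w 1) && V y z w.
Proof. by case: w => [|e [|f w]]. Qed.

Lemma V_nil x y : V x y [::] = true.
Proof. by []. Qed.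

Fixpoint inW (w : seq bool) : bool :=
  match w with
  | [::] => true
  | false :: true :: r =>
      match r with
      | [::] => true
      | true :: r' => inW r'
      | false :: true :: true :: r' => inW r'
      | _ => false
      end
  | _ => false
  end.

Lemma V_inW n : forall c, size c <= n ->
  V false true c = inW [:: false, true & c] /\
  (~~ nth false c 0) && V true true c = inW c.
Proof.
elim: n => [|n IH] c hc.
  by case: c hc.
split.
  case: c hc => [|[] r] hc //.
    rewrite V_cons /q /=.
    have := (IH r (ltac:(simpl in hc; lia))).2.
    by case: r {hc} => [|[] r] //=.
  rewrite V_cons /q /=.
  case: r hc => [|[] [|[] r]] hc; rewrite ?V_cons //=.
  by have := (IH r (ltac:(simpl in hc; lia))).2.
case: c hc => [|[] r] hc //.
rewrite /= V_cons /q /=.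
case: r hc => [|[] r] hc; rewrite ?V_cons //=.
have := (IH r (ltac:(simpl in hc; lia))).1.
by rewrite /q /=.
Qed.

Lemma ES_inW c : ev_stable c = (c == [::]) || inW (false :: c).
Proof.
rewrite ES_win -/(V false false c); case: c => [|[] r] //.
  by rewrite V_cons (V_inW (leqnn (size r))).1 /q.
by rewrite V_cons /q.
Qed.


Definition T1 := [:: false; true].
Definition T2 := [:: false; true; true].

Fixpoint genW (a b : nat) : seq (seq bool) :=
  match a with
  | 0 => if b == 0 then [:: [::]] else if b == 1 then [:: T1] else [::]
  | a'.+1 => map (cat T2) (genW a' b) ++
             (if b is b'.+1 then map (cat (T1 ++ T2)) (genW a' b') else [::])
  end.

Lemma size_genW a b : size (genW a b) = 'C(a.+1, b).
Proof.
elim: a b => [|a IH] b.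
  by case: b => [|[|b]].
rewrite /= size_cat size_map IH; case: b => [|b]; first by rewrite !bin0.
by rewrite size_map IH [in RHS]binS.
Qed.

Lemma catI (p : seq bool) : injective (cat p).
Proof. by elim: p => // x p IH s1 s2 /= [] /IH. Qed.

Lemma genW_uniq a b : uniq (genW a b).
Proof.
elim: a b => [|a IH] b.
  by case: b => [|[|b]].
rewrite /= cat_uniq map_inj_uniq ?IH //; last by move=> x y [ ].
case: b => [|b] //=.
rewrite map_inj_uniq ?IH ?andbT; last by move=> x y [ ].
apply/hasPn => x /mapP [w _ ->]; apply/negP => /mapP [w' _].
by case.
Qed.

Lemma genW_mem a b w : w \in genW a b ->
  [&& inW w, size w == 3*a+2*b & count id w == 2*a+b].
Proof.
elim: a b w => [|a IH] b w.
  case: b => [|[|b]] //=; rewrite inE => /eqP -> //.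
rewrite /= mem_cat => /orP [].
  move=> /mapP [w' /IH /and3P [h1 /eqP h2 /eqP h3] ->] /=.
  by rewrite h1 h2 h3; apply/andP; split; apply/eqP; lia.
case: b => [|b] //= /mapP [w' /IH /and3P [h1 /eqP h2 /eqP h3] ->] /=.
by rewrite h1 h2 h3; apply/andP; split; apply/eqP; lia.
Qed.

Lemma inW_genW n : forall w, size w <= n -> inW w -> exists a b, w \in genW a b.
Proof.
elim: n => [|n IH] w hw.
  by case: w hw => // _ _; exists 0, 0.
case: w hw => [|[] [|[] r]] hw //=.
  by move=> _; exists 0, 0.
case: r hw => [|[] r] hw.
- by move=> _; exists 0, 1.
- move=> /(IH r (ltac:(simpl in hw; lia))) [a [b h]].
  exists a.+1, b; rewrite /= mem_cat; apply/orP; left.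
  by apply/mapP; exists r.
case: r hw => [|[] [|[] r]] hw //.
move=> /(IH r (ltac:(simpl in hw; lia))) [a [b h]].
exists a.+1, b.+1; rewrite /= mem_cat; apply/orP; right.
by apply/mapP; exists r.
Qed.

Lemma genW_memE a b w : (w \in genW a b) =
  [&& inW w, size w == 3*a+2*b & count id w == 2*a+b].
Proof.
apply/idP/idP; first exact: genW_mem.
move=> /and3P [h1 /eqP h2 /eqP h3].
have [a' [b' h]] := inW_genW (leqnn _) h1.
move/genW_mem: (h) => /and3P [_ /eqP h4 /eqP h5].
have ea : a' = a by lia.
have eb : b' = b by lia.
by rewrite -ea -eb.
Qed.

Lemma J0E k n a b : n.+1 = 3*a+2*b -> k = 2*a+b -> J0 k n = 'C(a.+1, b).
Proof.
move=> hn hk.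
pose s := map behead (genW a b).
pose st := pmap (insub : seq bool -> option (n.-tuple bool)) s.
have memst : forall t : n.-tuple bool, (t \in st) = (ev_stable t && (count id t == k)).
  move=> t; rewrite mem_pmap_sub ES_inW.
  have -> : (val t == [::]) = false by apply/negP => /eqP e; move: (size_tuple t); rewrite e /=; lia.
  rewrite /=; apply/idP/idP.
    move=> /mapP [w hw ew]; move: (hw); rewrite genW_memE => /and3P [h1 /eqP h2 /eqP h3].
    case: w hw ew h1 h2 h3 => [|[] w] hw ew //=; first by lia.
    move=> hi h2 h3; rewrite [tval t]ew hi /=; apply/eqP; lia.
  move=> /andP [h1 /eqP h2].
  have : (false :: val t) \in genW a b.
    by rewrite genW_memE /= h1 size_tuple h2 hk !eqxx; apply/eqP; lia.
  by move/(map_f behead).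
rewrite /J0 (eq_card (B := mem st)); last by move=> t; rewrite inE memst.
have hd : forall w, w \in genW a b -> w = false :: behead w.
  move=> w; rewrite genW_memE => /and3P [h1 /eqP h2 _].
  by case: w h1 h2 => [|[] w] //= _ h2; lia.
have us : uniq s.
  rewrite map_inj_in_uniq ?genW_uniq // => x y hx hy e.
  by rewrite (hd _ hx) (hd _ hy) e.
move/card_uniqP: (pmap_sub_uniq (n.-tuple bool) us) => ->.
rewrite size_pmap_sub -size_genW.
have -> : count (fun x => size x == n) s = size s.
  apply/eqP; rewrite -all_count; apply/allP => x /mapP [w hw ->].
  move: (hw); rewrite genW_memE => /and3P [_ /eqP h2 _].
  by rewrite size_behead h2; apply/eqP; lia.
by rewrite size_map.
Qed.


Open Scope R_scope.
Delimit Scope R_scope with R.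
From Coquelicot Require Import Rbar.
Delimit Scope R_scope with R.

Lemma factE n : n`! = Factorial.fact n.
Proof. by elim: n => // n IH; rewrite factS IH. Qed.

Lemma INR_bin n k : (k <= n)%N -> INR 'C(n, k) = Binomial.C n k.
Proof.
move=> hk; rewrite /Binomial.C.
have H := bin_fact hk. rewrite !factE in H. change (subn n k) with (Nat.sub n k) in H.
have H1 : INR 'C(n, k) * (INR (Factorial.fact k) * INR (Factorial.fact (Nat.sub n k))) = INR (Factorial.fact n).
  by rewrite -!mult_INR -H.
rewrite -H1. field.
split; apply not_0_INR; have := Factorial.lt_O_fact; move=> h; [have := h (n - k)%coq_nat | have := h k]; lia.
Qed.

Lemma HJ_lemma : forall k n a b, S n = (3*a+2*b)%coq_nat -> k = (2*a+b)%coq_nat -> (0 < b)%coq_nat /\ (b < S a)%coq_nat ->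
      INR (J k n) = Binomial.C (S a) b.
Proof.
move=> k n a b h1 h2 h3.
have E : J0 k n = 'C(a.+1, b) by apply: J0E; lia.
have P : (0 < 'C(a.+1, b))%N by rewrite bin_gt0; lia.
rewrite /J E; have -> : ('C(a.+1, b) == 0)%N = false by lia.
apply: INR_bin; lia.
Qed.

Lemma witness rho : (0 < rho)%R -> exists k n : nat -> nat, admissible_seq rho k n.
Proof.
move=> hr.
have pf : forall i, (0 <= rho * INR i)%R.
  move=> i; apply: Rmult_le_pos; [lra | apply: pos_INR].
exists (fun i => proj1_sig (nfloor_ex _ (pf i))), (fun i => i).
split; first exact: is_lim_seq_INR.
eapply (is_lim_seq_le_le_loc (fun i => rho - / INR i)%R _ (fun _ : nat => rho) rho).
- exists 1%N => i hi.
  case: (nfloor_ex _ (pf i)) => m /= [hm1 hm2].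
  have hi' : (0 < INR i)%R by apply: lt_0_INR; lia.
  split.
  + apply: (Rmult_le_reg_r (INR i)) => //.
    rewrite /Rdiv Rmult_assoc Rinv_l; last lra.
    rewrite Rmult_minus_distr_r Rinv_l; lra.
  + apply: (Rmult_le_reg_r (INR i)) => //.
    rewrite /Rdiv Rmult_assoc Rinv_l; lra.
- have -> : Finite rho = Finite (rho - 0)%R by rewrite Rminus_0_r.
  apply: is_lim_seq_minus'; first exact: is_lim_seq_const.
  exact: (is_lim_seq_inv _ _ is_lim_seq_INR ltac:(discriminate)).
- exact: is_lim_seq_const.
Qed.

Theorem mainTheorem3 (rho : R) :
  (3 / 5 < rho)%R -> (rho < 2 / 3)%R ->
  S_ES rho =
  Finite ((2 * rho - 1) * ln (2 * rho - 1)
          - (2 - 3 * rho) * ln (2 - 3 * rho)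
          - (5 * rho - 3) * ln (5 * rho - 3))%R.
Proof.
move=> H1 H2.
have L : forall k n, admissible_seq rho k n ->
  LimSup_seq (fun i => Rdiv (ln (INR (J (k i) (n i)))) (INR (n i))) = fS rho.
  move=> k n Ha; apply: is_LimSup_seq_unique; apply: is_lim_LimSup_seq.
  exact: (main_lim rho k n (fun k n => INR (J k n)) H1 H2 HJ_lemma Ha).
rewrite /S_ES; apply: Rbar_is_lub_unique; split.
  move=> l [k [n [Ha ->]]]; rewrite (L k n Ha) /=; exact: Rle_refl.
move=> bnd Hub.
have [k [n Ha]] := @witness rho ltac:(lra).
apply: Hub; exists k, n; split => //.
by rewrite (L k n Ha).
Qed.
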